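(* Consider a shared-cache coded caching system with $N$ files $X^1,\dots,X^N$, $K$ users and $\Lambda\le K$ caches, with $N\ge K$, and let $t=\Lambda\gamma\in\{1,\dots,\Lambda\}$ be an integer. The users are partitioned into sets $\mathcal{U}_1,\dots,\mathcal{U}_\Lambda$, where $\mathcal{U}_\lambda$ is the set of users associated with cache $\lambda$, and the caches are labelled so that $\mathcal{L}_1\ge\mathcal{L}_2\ge\dots\ge\mathcal{L}_\Lambda$, where $\mathcal{L}_\lambda=|\mathcal{U}_\lambda|$. Let the placement be the SC placement $\mathcal{M}_{\text{SC}}$ described in the context, and let $\mathbf{d}_{\text{worst}}=(d_1,\dots,d_K)$ be a demand vector in which the users request pairwise distinct files. Then the generalized independence number and the min-rank over $\mathbb{F}_q$ of the induced index coding problem $\mathcal{I}(\mathcal{M}_{\text{SC}},\mathbf{d}_{\text{worst}})$ satisfy $$\alpha(\mathcal{M}_{\text{SC}},\mathbf{d}_{\text{worst}})=\kappa(\mathcal{M}_{\text{SC}},\mathbf{d}_{\text{worst}})=\sum_{i=1}^{\Lambda-\Lambda\gamma}\mathcal{L}_i\binom{\Lambda-i}{\Lambda\gamma}.$$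
   Context: Binomial convention: $\binom{n}{k}=\frac{n!}{(n-k)!k!}$ and $\binom{n}{k}=0$ if $n<k$. Here $\gamma=M/N$, where $M$ is the normalized cache memory, and $t=\Lambda\gamma$ is assumed to be an integer. SC placement $\mathcal{M}_{\text{SC}}$: each file $X^n$ is split into $\binom{\Lambda}{t}$ disjoint subfiles $X^n_{\mathcal{T}}$, one for each $\mathcal{T}\subseteq[\Lambda]$ with $|\mathcal{T}|=t$, and each subfile is regarded as a single symbol of the finite field $\mathbb{F}_q$. Cache $\lambda$ stores all subfiles $X^n_{\mathcal{T}}$ with $\lambda\in\mathcal{T}$, $n\in[N]$. Every user associated with cache $\lambda$ has access to exactly that cache's content. Index coding problem $\mathcal{I}(\mathcal{M}_{\text{SC}},\mathbf{d})$: its messages are the $N\binom{\Lambda}{t}$ subfiles $X^n_{\mathcal{T}}$. For each user $u$, associated with cache $\lambda$ and demanding file $d_u$, and for each $\mathcal{T}$ with $\lambda\notin\mathcal{T}$, there is one receiver that demands $X^{d_u}_{\mathcal{T}}$ and whose side-information set is the set of messages stored in cache $\lambda$. For an index coding problem with messages indexed by $[n]$ and receivers $i\in[K']$, where receiver $i$ demands message $f(i)$ and has side-information index set $\mathcal{X}_i$ with $f(i)\notin\mathcal{X}_i$, define the following. - Min-rank over $\mathbb{F}_q$: $\kappa=\min\{\mathrm{rank}_q(\{\mathbf{v}_i+\mathbf{e}_{f(i)}\}_{i\in[K']}) : \mathbf{v}_i\in\mathbb{F}_q^n,\ \mathrm{supp}(\mathbf{v}_i)\subseteq\mathcal{X}_i\}$,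 where $\mathbf{e}_j$ is the $j$-th standard unit vector. This equals the minimum length of a scalar linear index code over $\mathbb{F}_q$. - Generalized independence number: let $\mathcal{Y}_i=[n]\setminus(\{f(i)\}\cup\mathcal{X}_i)$ and $\mathcal{J}=\bigcup_{i}\{\{f(i)\}\cup Y_i : Y_i\subseteq\mathcal{Y}_i\}$. A set $H\subseteq[n]$ is a generalized independent set if every nonempty subset of $H$ belongs to $\mathcal{J}$. Then $\alpha$ is the maximum size of a generalized independent set. $\alpha(\mathcal{M}_{\text{SC}},\mathbf{d})$ and $\kappa(\mathcal{M}_{\text{SC}},\mathbf{d})$ denote these quantities for $\mathcal{I}(\mathcal{M}_{\text{SC}},\mathbf{d})$. *)

(* Defs.v *)
From HB Require Import structures.
From mathcomp Require Import all_boot all_order all_algebra.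
Set Implicit Arguments. Unset Strict Implicit. Unset Printing Implicit Defensive.
Import GRing.Theory.

(* Messages: finType Msg; receivers: finType Rcv; receiver i demands f i and
   has side information X i. *)
Section IndexCoding.
Variables (Msg Rcv : finType) (f : Rcv -> Msg) (X : Rcv -> {set Msg}).

Local Open Scope ring_scope.
Definition ic_matrix (F : fieldType) (V : Rcv -> Msg -> F)
  : 'M[F]_(#|Rcv|, #|Msg|) :=
  \matrix_(i < #|Rcv|, j < #|Msg|)
     (V (enum_val i) (enum_val j) + ((enum_val j == f (enum_val i))%:R)%R).

Definition ic_admissible (F : finFieldType) (V : {ffun Rcv -> {ffun Msg -> F}}) :=
  [forall i, forall j, (V i j != 0%R) ==> (j \in X i)].

Local Close Scope ring_scope.
Definition minrank (F : finFieldType) : nat :=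
  \big[minn/#|Rcv|]_(V : {ffun Rcv -> {ffun Msg -> F}} | ic_admissible V)
     \rank (ic_matrix (fun i j => V i j)).

Definition Yset (i : Rcv) : {set Msg} := ~: (f i |: X i).

Definition in_J (S : {set Msg}) : bool :=
  [exists i, exists Y : {set Msg}, (Y \subset Yset i) && (S == f i |: Y)].

Definition gen_indep (H : {set Msg}) : bool :=
  [forall S : {set Msg}, ((S \subset H) && (S != set0)) ==> in_J S].

Definition alpha : nat := \max_(H : {set Msg} | gen_indep H) #|H|.

End IndexCoding.

Section SharedCache.
Variables (N K Lam t : nat) (c : 'I_K -> 'I_Lam) (d : 'I_K -> 'I_N).

(* subfile X^n_T, |T| = t *)
Definition sc_msg := {x : 'I_N * {set 'I_Lam} | #|x.2| == t}.

(* receiver (u, T) with cache c u not in T, |T| = t *)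
Definition sc_rcv :=
  {y : 'I_K * {set 'I_Lam} | (#|y.2| == t) && (c y.1 \notin y.2)}.

Lemma sc_rcv_card (r : sc_rcv) : #|(val r).2| == t.
Proof. by case/andP: (valP r). Qed.

Definition sc_demand (r : sc_rcv) : sc_msg :=
  @Sub _ _ sc_msg (d (val r).1, (val r).2) (sc_rcv_card r).

(* side information: everything stored in cache c u *)
Definition sc_side (r : sc_rcv) : {set sc_msg} :=
  [set m : sc_msg | c (val r).1 \in (val m).2].

Definition load (lam : 'I_Lam) : nat := #|[set u | c u == lam]|.

End SharedCache.

(* Main.v *)
Require Import Defs.
From HB Require Import structures.
From mathcomp Require Import all_boot all_order all_algebra zify.
Set Implicit Arguments. Unset Strict Implicit. Unset Printing Implicit Defensive.
Import GRing.Theory.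

Lemma rank_le_rows (F : fieldType) m n (A : 'M[F]_(m,n)) (T : finType)
  (H : {set T}) (W : T -> 'rV[F]_n) (g : 'I_m -> T) :
  (forall i, g i \in H) -> (forall i, row i A = W (g i)) -> \rank A <= #|H|.
Proof.
move=> gH rA.
pose C : 'M[F]_(#|H|, n) := (\matrix_(l < #|H|, j < n) W (enum_val l) 0 j)%R.
apply: leq_trans (rank_leq_row C).
apply: mxrankS; apply/row_subP => i.
rewrite rA -(enum_rankK_in (gH i) (gH i)) (_ : W _ = row (enum_rank_in (gH i) (g i)) C); last by apply/rowP => j; rewrite !mxE.
exact: row_sub.
Qed.

Lemma bigminn_le (I : finType) (P : pred I) (F : I -> nat) x j :
  P j -> \big[minn/x]_(i | P i) F i <= F j.
Proof.
move=> Pj; rewrite unlock.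
have : j \in index_enum I by rewrite mem_index_enum.
elim: (index_enum I) => [//|a r IH] /=.
rewrite inE => /orP [/eqP <-|jr].
  by rewrite Pj geq_minl.
case: (P a) => /=; last exact: IH jr.
exact: leq_trans (geq_minr _ _) (IH jr).
Qed.

Section RG.
Local Open Scope ring_scope.
Lemma ic_rank_ge (Msg Rcv : finType) (f : Rcv -> Msg) (X : Rcv -> {set Msg})
  (F : finFieldType) (V : {ffun Rcv -> {ffun Msg -> F}}) (H : {set Msg}) :
  (forall i, f i \notin X i) ->
  ic_admissible X V -> gen_indep f X H ->
  (#|H| <= \rank (ic_matrix f (fun i j => V i j)))%N.
Proof.
move=> fX adm gi.
set A := ic_matrix _ _.
pose E : 'M[F]_(#|H|, #|Rcv|) :=
  (\matrix_(l < #|H|, i < #|Rcv|) A i (enum_rank (enum_val l)))%R.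
have -> : #|H| = \rank E.
  apply/esym/eqP; apply: inj_row_free => v vE0.
  apply/rowP => l0; rewrite mxE; apply/eqP/negP => /negP nz.
  pose S : {set Msg} := [set enum_val l | l in [set l : 'I_#|H| | v 0 l != 0]].
  have SH : S \subset H by apply/subsetP => m /imsetP [l _ ->]; exact: enum_valP.
  have Sn0 : S != set0.
    by apply/set0Pn; exists (enum_val l0); apply/imsetP; exists l0; rewrite ?inE.
  move/forallP: gi => /(_ S); rewrite SH Sn0 /= => /existsP [i /existsP [Y /andP [YY /eqP SE]]].
  have fiS : f i \in S by rewrite SE setU11.
  case/imsetP: fiS => l1; rewrite inE => v1 fie.
  move/rowP: vE0 => /(_ (enum_rank i)); rewrite !mxE.
  rewrite (bigD1 l1) //= big1 ?addr0.
    rewrite !mxE !enum_rankK -fie eqxx.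
    have -> : V i (f i) = 0.
      apply/eqP; apply/negP => /negP h.
      by move/forallP: adm => /(_ i) /forallP /(_ (f i)); rewrite h /= (negbTE (fX i)).
    by rewrite add0r mulr1 => /eqP; rewrite (negbTE v1).
  move=> l ll1; rewrite !mxE !enum_rankK.
  have [->|vl] := eqVneq (v 0 l) 0; first by rewrite mul0r.
  have lS : enum_val l \in S by apply/imsetP; exists l; rewrite ?inE.
  have ne : enum_val l != f i.
    by rewrite fie; apply/eqP => /enum_val_inj E'; rewrite E' eqxx in ll1.
  have lY : enum_val l \in Y by move: lS; rewrite SE in_setU1 (negbTE ne).
  move/subsetP: YY => /(_ _ lY); rewrite /Yset in_setC in_setU1 (negbTE ne) /= => nX.
  have -> : V i (enum_val l) = 0.
    apply/eqP; apply/negP => /negP h.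
    by move/forallP: adm => /(_ i) /forallP /(_ (enum_val l)); rewrite h /= (negbTE nX).
  by rewrite add0r mulr0.
rewrite -(mxrank_tr A); apply: mxrankS; apply/row_subP => l.
have -> : row l E = row (enum_rank (enum_val l)) A^T.
  by apply/rowP => i; rewrite !mxE.
exact: row_sub.
Qed.
End RG.
Lemma card_gt_ord n (i : nat) : #|[set l : 'I_n | i < l]| = n - i.+1.
Proof.
rewrite -sum1_card big_mkcond /=.
rewrite (eq_bigr (fun l : 'I_n => nat_of_bool (i < l))); last by move=> l _; rewrite inE; case: (i < l).
rewrite -(big_mkord xpredT (fun l => nat_of_bool (i < l))).
elim: n => [|n IH]; first by rewrite big_geq.
rewrite big_nat_recr //= IH.
case: (ltnP i n) => h.
  by rewrite addn1 subSn.
have -> : n - i.+1 = 0 by apply/eqP; rewrite subn_eq0 ltnW // ltnS.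
by rewrite subSS; apply/esym/eqP; rewrite subn_eq0.
Qed.

Lemma jj_surj (T : finType) (A : {set T}) (h : T -> nat) :
  {in A &, injective h} -> (forall x, x \in A -> h x < #|A|) ->
  forall j, j < #|A| -> exists2 x, x \in A & h x = j.
Proof.
move=> hi hlt j jlt.
have U : uniq [seq h x | x <- enum A] by rewrite map_inj_in_uniq ?enum_uniq // => x y; rewrite !mem_enum; exact: hi.
have S1 : {subset [seq h x | x <- enum A] <= iota 0 #|A|}.
  by move=> y /mapP [x]; rewrite mem_enum mem_iota => xA ->; rewrite add0n hlt.
have S2 : size (iota 0 #|A|) <= size [seq h x | x <- enum A].
  by rewrite size_iota size_map -cardE.
have [_ E] := uniq_min_size U S1 S2.
have : j \in iota 0 #|A| by rewrite mem_iota.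
by rewrite -E => /mapP [x]; rewrite mem_enum => xA ->; exists x.
Qed.

Section SC.
Variables (F : finFieldType) (N K Lam t : nat) (c : 'I_K -> 'I_Lam) (d : 'I_K -> 'I_N).
Hypothesis dinj : injective d.
Hypothesis t1 : 1 <= t.
Hypothesis loadmon : forall i j : 'I_Lam, i <= j -> load c j <= load c i.

Local Notation Msg := (sc_msg N Lam t).
Local Notation Rcv := (sc_rcv t c).
Local Notation fD := (@sc_demand N K Lam t c d).
Local Notation XS := (@sc_side N K Lam t c).

Definition above (u : 'I_K) : {set 'I_Lam} := [set l : 'I_Lam | c u < l].
Definition Hset : {set Msg} :=
  [set m : Msg | [exists u, (d u == (val m).1) && ((val m).2 \subset above u)]].

Lemma card_Hset :
  #|Hset| = \sum_(i < Lam | i < Lam - t) load c i * 'C(Lam - i.+1, t).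
Proof.
pose P : {set 'I_K * {set 'I_Lam}} := [set p : 'I_K * {set 'I_Lam} | (p.2 \subset above p.1) && (#|p.2| == t)].
pose phi := fun p : 'I_K * {set 'I_Lam} => (d p.1, p.2).
have phiI : injective phi by move=> [u1 T1] [u2 T2] [/dinj -> ->].
have E : [set val m | m in Hset] = [set phi p | p in P].
  apply/setP => x; apply/imsetP/imsetP.
  - move=> [m]; rewrite inE => /existsP [u /andP [/eqP du sub]] ->.
    exists (u, (val m).2); first by rewrite inE /= sub (valP m).
    by rewrite /phi /= du -surjective_pairing.
  - move=> [[u T]]; rewrite inE /= => /andP [sub ct] ->.
    exists (Sub (d u, T) ct : Msg); last by rewrite SubK.
    by rewrite inE; apply/existsP; exists u; rewrite SubK /= eqxx sub.
rewrite -(card_imset _ val_inj) E (card_imset _ phiI).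
have -> : #|P| = \sum_u 'C(Lam - (c u).+1, t).
  rewrite -sum1_card big_mkcond /=.
  transitivity (\sum_u \sum_(T : {set 'I_Lam}) (if (u, T) \in P then 1 else 0)).
    by rewrite pair_big /=; apply: eq_bigr => [[u T]].
  apply: eq_bigr => u _.
  rewrite -(card_gt_ord Lam (c u)) -/(above u) -cards_draws -sum1_card /=.
  by rewrite [RHS]big_mkcond; apply: eq_bigr => T _; rewrite !inE.
rewrite (partition_big (P:=xpredT) c xpredT) //=.
rewrite [RHS]big_mkcond; apply: eq_bigr => l _.
rewrite (eq_bigr (fun _ => 'C(Lam - l.+1, t))); last by move=> u /eqP ->.
have -> : \sum_(i < K | c i == l) 'C(Lam - l.+1, t) = load c l * 'C(Lam - l.+1, t).
  by rewrite /load -sum1_card big_distrl /=; apply: eq_big => [i|i _]; rewrite ?inE ?mul1n.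
case: ifP => // /negbT; rewrite -leqNgt => h; rewrite bin_small ?muln0 //; lia.
Qed.

Definition cof (m : Msg) : nat :=
  if [pick u | d u == (val m).1] is Some u then c u else 0.

Lemma cofE m u : d u = (val m).1 -> cof m = c u.
Proof.
move=> du; rewrite /cof; case: pickP => [u' /eqP du'|/(_ u)].
  by rewrite (dinj (etrans du' (esym du))).
by rewrite du eqxx.
Qed.

Lemma Hset_indep : gen_indep fD XS Hset.
Proof.
apply/forallP => S; apply/implyP => /andP [SH Sn0].
case/set0Pn: Sn0 => m0 m0S.
case: (@arg_minnP _ m0 (mem S) cof m0S) => m mS mmin.
have /subsetP/(_ m mS) := SH; rewrite inE => /existsP [u /andP [/eqP du sub]].
have cuT : c u \notin (val m).2.
  by apply/negP => /(subsetP sub); rewrite inE ltnn.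
have rP : (#|(u, (val m).2).2| == t) && (c (u, (val m).2).1 \notin (u, (val m).2).2).
  by rewrite /= (valP m) cuT.
pose r : Rcv := Sub (u, (val m).2) rP.
have fr : fD r = m.
  by apply: val_inj; rewrite /sc_demand !SubK /= du -surjective_pairing.
apply/existsP; exists r; apply/existsP; exists (S :\ m); rewrite fr setD1K // eqxx andbT.
apply/subsetP => m'; rewrite in_setD1 => /andP [m'm m'S].
rewrite /Yset in_setC in_setU1 fr (negbTE m'm) /= /sc_side inE.
have /subsetP/(_ m' m'S) := SH; rewrite inE => /existsP [u' /andP [/eqP du' sub']].
have := mmin m' m'S; rewrite (cofE du) (cofE du') => le.
by rewrite /r SubK /=; apply/negP => /(subsetP sub'); rewrite inE ltnNge le.
Qed.

Definition jj (u : 'I_K) : nat := #|[set u' | (c u' == c u) && (u' < u)]|.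

Lemma jj_inj u1 u2 : c u1 = c u2 -> jj u1 = jj u2 -> u1 = u2.
Proof.
move=> cu.
wlog lt : u1 u2 cu / u1 < u2.
  move=> W e; case: (ltngtP u1 u2) => h.
  - exact: W.
  - exact/esym/(W u2 u1).
  - exact: val_inj.
move=> e; exfalso; suff : jj u1 < jj u2 by rewrite e ltnn.
apply: proper_card; apply/properP; split.
  apply/subsetP => x; rewrite !inE cu => /andP [-> h] /=; exact: ltn_trans h lt.
by exists u1; rewrite !inE ?cu ?eqxx ?lt ?ltnn.
Qed.

Lemma jj_lt u : jj u < load c (c u).
Proof.
apply: proper_card; apply/properP; split.
  by apply/subsetP => x; rewrite !inE => /andP [-> _].
by exists u; rewrite !inE ?eqxx ?ltnn.
Qed.

Lemma jj_ex (l : 'I_Lam) j : j < load c l -> exists u, (c u == l) && (jj u == j).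
Proof.
move=> jl.
have hi : {in [set u | c u == l] &, injective jj}.
  by move=> x y; rewrite !inE => /eqP cx /eqP cy; apply: jj_inj; rewrite cx cy.
have hlt : forall x, x \in [set u | c u == l] -> jj x < #|[set u | c u == l]|.
  by move=> x; rewrite inE => /eqP <-; exact: jj_lt.
have [x xA hx] := jj_surj hi hlt jl.
by exists x; move: xA; rewrite inE => ->; rewrite hx eqxx.
Qed.

Definition Qr (i : Rcv) : {set 'I_Lam} := c (val i).1 |: (val i).2.

Definition terms (Q : {set 'I_Lam}) (j : nat) : {set Msg} :=
  [set m : Msg | [exists u', [&& c u' \in Q, jj u' == j, (val m).1 == d u'
                                 & (val m).2 == Q :\ c u']]].

Definition Vd : {ffun Rcv -> {ffun Msg -> F}} :=
  [ffun i => [ffun m => if (m \in terms (Qr i) (jj (val i).1)) && (m != fD i)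
                        then 1%R else 0%R]].

Lemma cT (i : Rcv) : c (val i).1 \notin (val i).2.
Proof. by case/andP: (valP i). Qed.

Lemma fD_terms i : fD i \in terms (Qr i) (jj (val i).1).
Proof.
rewrite inE; apply/existsP; exists (val i).1.
by rewrite /Qr setU11 eqxx /= setU1K ?cT // !eqxx.
Qed.

Lemma Vd_adm : ic_admissible XS Vd.
Proof.
apply/forallP => i; apply/forallP => m; apply/implyP; rewrite !ffunE.
case: ifP => [/andP [mt mf] _|_]; last by rewrite eqxx.
move: mt; rewrite inE => /existsP [u' /and4P [cQ /eqP ju /eqP m1 /eqP m2]].
rewrite /sc_side inE m2 in_setD1 /Qr setU11 andbT.
apply/negP => /eqP cu.
have uu := jj_inj cu (esym ju).
move/negP: mf; apply; apply/eqP/val_inj.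
by rewrite /sc_demand SubK [LHS]surjective_pairing m1 m2 uu /Qr -cu setU1K ?cT.
Qed.

Lemma Vd_row i m :
  (Vd i m + (m == fD i)%:R)%R = ((m \in terms (Qr i) (jj (val i).1))%:R)%R.
Proof.
rewrite !ffunE; have [->|ne] := eqVneq m (fD i).
  by rewrite fD_terms /= add0r.
by rewrite /= ?andbT ?addr0; case: (_ \in _).
Qed.

Definition mu (i : Rcv) : 'I_Lam := [arg min_(l < c (val i).1 in Qr i) (l : nat)].

Lemma mu_spec i : mu i \in Qr i /\ forall l, l \in Qr i -> mu i <= l.
Proof. by rewrite /mu; case: arg_minnP; first exact: setU11. Qed.

Definition g (i : Rcv) : Msg :=
  if [pick u' | (c u' == mu i) && (jj u' == jj (val i).1)] is Some u'
  then insubd (fD i) (d u', Qr i :\ mu i) else fD i.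

Lemma g_spec i : exists u',
  [/\ c u' = mu i, jj u' = jj (val i).1 & val (g i) = (d u', Qr i :\ mu i)].
Proof.
have [muQ mumin] := mu_spec i.
have lt : jj (val i).1 < load c (mu i).
  exact: leq_trans (jj_lt _) (loadmon (mumin _ (setU11 _ _))).
rewrite /g; case: pickP => [u' /andP [/eqP cu /eqP ju]|none].
  exists u'; split => //; rewrite val_insubd /=.
  have : #|Qr i| = t.+1 by rewrite /Qr cardsU1 cT (eqP (sc_rcv_card i)).
  by rewrite (cardsD1 (mu i)) muQ add1n => -[->]; rewrite eqxx.
by case: (jj_ex lt) => u /andP [h1 h2]; move: (none u); rewrite h1 h2.
Qed.

Lemma g_H i : g i \in Hset.
Proof.
have [u' [cu ju gv]] := g_spec i.
rewrite inE; apply/existsP; exists u'; rewrite gv /= eqxx /=.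
apply/subsetP => l; rewrite in_setD1 => /andP [lm lQ]; rewrite inE cu.
have := (mu_spec i).2 l lQ; rewrite leq_eqVlt => /orP [/eqP e|//].
by rewrite (val_inj e) eqxx in lm.
Qed.

Definition W (h : Msg) : 'rV[F]_#|{: Msg}| :=
  if [pick u | d u == (val h).1] is Some u
  then (\row_(k < #|{: Msg}|) ((enum_val k \in terms (c u |: (val h).2) (jj u))%:R))%R
  else 0%R.

Lemma row_eq (k : 'I_#|{: Rcv}|) :
  row k (ic_matrix fD (fun i j => Vd i j)) = W (g (enum_val k)).
Proof.
set i := enum_val k.
have [u' [cu ju gv]] := g_spec i.
rewrite /W; case: pickP => [u /eqP du| /(_ u')]; last by rewrite gv eqxx.
have uu : u = u' by apply: dinj; rewrite du gv.
subst u; apply/rowP => l; rewrite !mxE Vd_row gv /= cu ju setD1K //.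
exact: (mu_spec i).1.
Qed.

Lemma rank_Vd : \rank (ic_matrix fD (fun i j => Vd i j)) <= #|Hset|.
Proof.
apply: (rank_le_rows (g := fun k => g (enum_val k)) (W := W)) => k.
  exact: g_H.
exact: row_eq.
Qed.

Lemma fD_notin i : fD i \notin XS i.
Proof. by rewrite /sc_side inE /sc_demand SubK cT. Qed.

End SC.

Theorem theorem1 (F : finFieldType) (N K Lam t : nat)
  (c : 'I_K -> 'I_Lam) (d : 'I_K -> 'I_N) :
  Lam <= K -> K <= N -> 1 <= t <= Lam ->
  (forall i j : 'I_Lam, i <= j -> load c j <= load c i) ->
  injective d ->
  alpha (@sc_demand N K Lam t c d) (@sc_side N K Lam t c)
    = \sum_(i < Lam | i < Lam - t) load c i * 'C(Lam - i.+1, t) /\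
  minrank (@sc_demand N K Lam t c d) (@sc_side N K Lam t c) F
    = \sum_(i < Lam | i < Lam - t) load c i * 'C(Lam - i.+1, t).
Proof.
move=> _ _ /andP [t1 _] mon dinj.
have cH := @card_Hset N K Lam t c d dinj t1.
have aH : #|Hset t c d| <= alpha (@sc_demand N K Lam t c d) (@sc_side N K Lam t c).
  exact: (@leq_bigmax_cond _ (gen_indep (@sc_demand N K Lam t c d) (@sc_side N K Lam t c)) (fun H => #|H|) _ (@Hset_indep N K Lam t c d dinj)).
have am : alpha (@sc_demand N K Lam t c d) (@sc_side N K Lam t c)
          <= minrank (@sc_demand N K Lam t c d) (@sc_side N K Lam t c) F.
  apply/bigmax_leqP => H gi; rewrite /minrank.
  apply: (big_ind (fun x => #|H| <= x)).
  - have adm0 : ic_admissible (@sc_side N K Lam t c) [ffun _ => [ffun _ => (0 : F)%R]].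
      by apply/forallP => i; apply/forallP => m; rewrite !ffunE eqxx.
    exact: leq_trans (ic_rank_ge (@fD_notin N K Lam t c d) adm0 gi) (rank_leq_row _).
  - by move=> x y hx hy; rewrite leq_min hx hy.
  - by move=> V adm; exact: ic_rank_ge (@fD_notin N K Lam t c d) adm gi.
have mr : minrank (@sc_demand N K Lam t c d) (@sc_side N K Lam t c) F <= #|Hset t c d|.
  apply: leq_trans (@rank_Vd F N K Lam t c d dinj mon).
  exact: (bigminn_le _ _ (Vd_adm F t c d)).
rewrite -cH; split; apply/eqP; rewrite eqn_leq.
  by rewrite aH (leq_trans am mr).
by rewrite mr (leq_trans aH am).
Qed.
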